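(* Let $\mathfrak n$ be a finite-dimensional 2-step nilpotent Lie algebra over a field $k$ of characteristic zero, with center $\mathfrak z$ and a linear complement $W$ of $\mathfrak z$ in $\mathfrak n$. Then $(\Lambda^2\mathfrak n)^{\mathfrak n}\subseteq (W\wedge\mathfrak z)\oplus\Lambda^2\mathfrak z$, i.e. every $\mathfrak n$-invariant element of $\Lambda^2\mathfrak n$ has zero component in $\Lambda^2W$ with respect to $\Lambda^2\mathfrak n=\Lambda^2W\oplus(W\wedge\mathfrak z)\oplus\Lambda^2\mathfrak z$.
   Context: 2-step nilpotent means $[\mathfrak n,[\mathfrak n,\mathfrak n]]=0$, so $[\mathfrak n,\mathfrak n]\subseteq\mathfrak z$. $\mathfrak n$ acts on $\Lambda^2\mathfrak n$ by $\mathrm{ad}_x(a\wedge b)=[x,a]\wedge b+a\wedge[x,b]$; $(\Lambda^2\mathfrak n)^{\mathfrak n}$ is the set of elements killed by all $\mathrm{ad}_x$. *)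

(* Defs.v *)
From HB Require Import structures.
From mathcomp Require Import all_boot all_order all_algebra.
Set Implicit Arguments. Unset Strict Implicit. Unset Printing Implicit Defensive.
Import GRing.Theory.
Local Open Scope ring_scope.

Definition is_lie_bracket (k : fieldType) (N : nat)
    (br : 'rV[k]_N -> 'rV[k]_N -> 'rV[k]_N) : Prop :=
  [/\ (forall x a y z, br x (a *: y + z) = a *: br x y + br x z),
      (forall y a x z, br (a *: x + z) y = a *: br x y + br z y),
      (forall x, br x x = 0) &
      (forall x y z, br x (br y z) + br y (br z x) + br z (br x y) = 0)].

Definition two_step_nilpotent (k : fieldType) (N : nat)
    (br : 'rV[k]_N -> 'rV[k]_N -> 'rV[k]_N) : Prop :=
  forall x y z, br x (br y z) = 0.

Definition central (k : fieldType) (N : nat)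
    (br : 'rV[k]_N -> 'rV[k]_N -> 'rV[k]_N) (v : 'rV[k]_N) : Prop :=
  forall x, br x v = 0.

Definition ad_mx (k : fieldType) (N : nat)
    (br : 'rV[k]_N -> 'rV[k]_N -> 'rV[k]_N) (x : 'rV[k]_N) : 'M[k]_N :=
  lin1_mx (br x).

(* Model of Lambda^2 n (char k = 0): skew-symmetric N x N matrices, where
   a /\ b is represented by a^T b - b^T a. *)
Definition wedge (k : fieldType) (N : nat) (a b : 'rV[k]_N) : 'M[k]_N :=
  a^T *m b - b^T *m a.

Definition in_Lambda2 (k : fieldType) (N : nat) (M : 'M[k]_N) : Prop :=
  M^T = - M.

(* Action of x on Lambda^2 n, the linear extension of
   ad_x (a /\ b) = [x,a] /\ b + a /\ [x,b]; in the model, D^T M + M D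
   with D = ad_mx br x. *)
Definition ad_wedge (k : fieldType) (N : nat)
    (br : 'rV[k]_N -> 'rV[k]_N -> 'rV[k]_N) (x : 'rV[k]_N) (M : 'M[k]_N)
    : 'M[k]_N :=
  (ad_mx br x)^T *m M + M *m ad_mx br x.

(* Component in Lambda^2 W of M w.r.t. Lambda^2 n = Lambda^2 W + (W /\ z)
   + Lambda^2 z: apply Lambda^2 of the projection P onto W along z,
   a /\ b |-> (aP) /\ (bP), i.e. M |-> P^T M P. *)
Definition Lambda2W_component (k : fieldType) (N : nat) (W Z M : 'M[k]_N)
    : 'M[k]_N :=
  let P := proj_mx W Z in P^T *m M *m P.

(* Main.v *)
Require Import Defs.
From HB Require Import structures.
From mathcomp Require Import all_boot all_order all_algebra.
Import GRing.Theory.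
Local Open Scope ring_scope.

Lemma ad_mxE (k : fieldType) (N : nat)
    (br : 'rV[k]_N -> 'rV[k]_N -> 'rV[k]_N) (x u : 'rV[k]_N) :
  is_lie_bracket br -> u *m ad_mx br x = br x u.
Proof.
case=> lin _ _ _.
pose f : {linear 'rV[k]_N -> 'rV[k]_N} :=
  HB.pack (br x) (GRing.isLinear.Build _ _ _ _ (br x) (lin x)).
exact: (mul_rV_lin1 f).
Qed.

Theorem mainTheorem3 (k : fieldType) (N : nat)
    (br : 'rV[k]_N -> 'rV[k]_N -> 'rV[k]_N)
    (W Z : 'M[k]_N) (M : 'M[k]_N) :
  [pchar k] =i pred0 ->
  is_lie_bracket br ->
  two_step_nilpotent br ->
  (forall v : 'rV[k]_N, (v <= Z)%MS <-> central br v) ->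
  (W :&: Z)%MS = 0 ->
  row_full (W + Z)%MS ->
  in_Lambda2 M ->
  (forall x : 'rV[k]_N, ad_wedge br x M = 0) ->
  Lambda2W_component W Z M = 0.
Proof.
move=> _ hL h2 hZ hWZ hfull _ hinv.
rewrite /Lambda2W_component.
set P := proj_mx W Z.
have subZ0 : forall (m : nat) (B : 'M_(m, N)) x, (B <= Z)%MS -> B *m ad_mx br x = 0.
  move=> m B x hB; apply/row_matrixP => i; rewrite row_mul row0 ad_mxE //.
  by apply: (proj1 (hZ _)); apply: submx_trans (row_sub i B) hB.
have DZ : forall x, (ad_mx br x <= Z)%MS.
  move=> x; apply/row_subP => i.
  rewrite -[ad_mx br x]mul1mx row_mul ad_mxE //.
  by apply: (proj2 (hZ _)) => y; apply: h2.
have DP : forall x, ad_mx br x *m P = 0 by move=> x; apply: proj_mx_0.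
have PD : forall x, P *m ad_mx br x = ad_mx br x.
  move=> x; apply/eqP; rewrite eq_sym -subr_eq0; apply/eqP.
  rewrite -{1}[ad_mx br x]mul1mx -mulmxBl; apply: subZ0.
  have := @proj_mx_compl_sub _ _ _ W Z (1%:M : 'M_N).
  rewrite mul1mx; apply; exact: submx_full.
set A := P^T *m M *m P.
have AD : forall x, A *m ad_mx br x = 0.
  move=> x; rewrite /A -mulmxA PD.
  have := congr1 (mulmx P^T) (hinv x).
  by rewrite /ad_wedge mulmxDr mulmxA -trmx_mul DP trmx0 mul0mx add0r mulmx0 mulmxA.
have AZ : (A <= Z)%MS.
  apply/row_subP => i; apply: (proj2 (hZ _)) => y.
  by rewrite -ad_mxE // -row_mul AD row0.
have PP : P *m P = P by exact: (proj_mx_proj hWZ).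
have -> : A = A *m P by rewrite /A -[RHS]mulmxA PP.
exact: proj_mx_0.
Qed.
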